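(* Let $T$ be a tree and let $v\in V(T)$. Then there exists a constant $C=C(T)$ with the following property. Let $H$ be a bipartite graph with parts $X$ and $Y$ such that $d(y)\ge C|X|^{1/2}$ for every $y\in Y$, and such that the number of triples $(y,x_1,x_2)\in Y\times X\times X$ of distinct vertices with $yx_1,yx_2\in E(H)$ is more than $C|X|^2$. Then $H$ contains a copy of $T[2]$ in which the two vertices corresponding to $v$ are embedded in $X$.
   Context: For a graph $F$, the $2$-blowup $F[2]$ is obtained by replacing each vertex $u$ of $F$ by an independent set of two vertices (the two images of $u$) and each edge by a copy of $K_{2,2}$ between the corresponding sets. $d(y)$ denotes the degree of $y$ in $H$. *)

(* Defs.v *)
From HB Require Import structures.
From mathcomp Require Import all_boot all_order all_algebra.
From mathcomp Require Export reals.
Set Implicit Arguments. Unset Strict Implicit. Unset Printing Implicit Defensive.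
Import Order.TTheory GRing.Theory Num.Theory.
Local Open Scope ring_scope.

Definition is_tree (T : finType) (e : rel T) : Prop :=
  [/\ symmetric e, irreflexive e,
      (forall x y : T, connect e x y) &
      (forall c : seq T, (2 < size c)%N -> ~~ ucycleb e c)].

Definition blowup2 (T : finType) (e : rel T) : rel (T * bool) :=
  fun p q => e p.1 q.1.

Definition bip_adj (X Y : finType) (adj : X -> Y -> bool) : rel (X + Y) :=
  fun p q => match p, q with
             | inl x, inr y => adj x y
             | inr y, inl x => adj x y
             | _, _ => false
             end.

Definition degY (X Y : finType) (adj : X -> Y -> bool) (y : Y) : nat :=
  #|[set x : X | adj x y]|.

Definition cherries (X Y : finType) (adj : X -> Y -> bool) : nat :=
  #|[set t : Y * X * X | [&& t.1.2 != t.2, adj t.1.2 t.1.1 & adj t.2 t.1.1]]|.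

Definition is_copy (V W : finType) (eF : rel V) (eH : rel W) (f : V -> W) : Prop :=
  injective f /\ (forall p q : V, eF p q -> eH (f p) (f q)).

(* Main.v *)
Require Import Defs.
From HB Require Import structures.
From mathcomp Require Import all_boot all_order all_algebra.
From mathcomp Require Import reals.
From mathcomp Require Import zify ring.
Import Order.TTheory GRing.Theory Num.Theory.
Set Implicit Arguments. Unset Strict Implicit. Unset Printing Implicit Defensive.
Open Scope nat_scope.
Open Scope nat_scope.

Lemma sum_pairs (I : finType) (a : I -> bool) :
  \sum_i \sum_j ((i != j) && a i && a j : nat) + \sum_i (a i : nat)
  = (\sum_i (a i : nat)) ^ 2.
Proof.
rewrite expnS expn1 big_distrl /= -big_split /=; apply: eq_bigr => i _.
rewrite big_distrr /= (bigD1 i) //= (bigD1 i (P := predT)) //= eqxx /=.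
rewrite add0n addnC; congr (_ + _); first by case: (a i).
apply: eq_bigr => j /negbTE ji; rewrite eq_sym ji /=.
by case: (a i); case: (a j).
Qed.

Lemma cauchy_schwarz (I : finType) (f : I -> nat) :
  (\sum_i f i) ^ 2 <= #|I| * \sum_i f i ^ 2.
Proof.
rewrite -(leq_pmul2l (isT : 0 < 2)).
have -> : (\sum_i f i) ^ 2 = \sum_i \sum_j f i * f j.
  by rewrite expnS expn1 big_distrl /=; apply: eq_bigr => i _; rewrite big_distrr.
have -> : 2 * (#|I| * \sum_i f i ^ 2) = \sum_i \sum_j (f i ^ 2 + f j ^ 2).
  rewrite mul2n -addnn.
  have -> : \sum_i \sum_j (f i ^ 2 + f j ^ 2) = \sum_i (#|I| * f i ^ 2 + \sum_j f j ^2).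
    apply: eq_bigr => i _; rewrite big_split /= sum_nat_const //.
  rewrite big_split /= sum_nat_const -big_distrr //.
rewrite big_distrr /=; apply: leq_sum => i _; rewrite big_distrr /=.
apply: leq_sum => j _.
have : 0 <= (f i - f j) ^ 2 by [].
case: (leqP (f i) (f j)) => h _.
- rewrite mulnA -[2 * f i * f j]/(2 * f i * f j). nia.
- nia.
Qed.
Open Scope nat_scope.
Section Gen.
Variables (A B : finType) (r : A -> B -> bool).
Definition nb (p : A * A) (y : B) : bool := [&& p.1 != p.2, r p.1 y & r p.2 y].
Definition cd p := \sum_y (nb p y : nat).
Definition pqg (p : A * A) (q : B * B) : bool :=
  [&& p.1 != p.2, q.1 != q.2, r p.1 q.1, r p.1 q.2, r p.2 q.1 & r p.2 q.2].

Lemma pqg_nb p q : pqg p q = [&& q.1 != q.2, nb p q.1 & nb p q.2].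
Proof.
rewrite /pqg /nb; case: (p.1 != p.2); case: (q.1 != q.2);
  case: (r p.1 q.1); case: (r p.1 q.2); case: (r p.2 q.1); case: (r p.2 q.2) => //.
Qed.

Lemma avoid p (S2 : {set B * B}) (U : {set B}) N :
  0 < cd p -> (2 * N + 1) * cd p <= \sum_(q in S2) (pqg p q : nat) ->
  #|U| <= N ->
  exists q, [/\ q \in S2, pqg p q, q.1 \notin U & q.2 \notin U].
Proof.
move=> cp hdeg hU.
case: (boolP [exists q, [&& q \in S2, pqg p q, q.1 \notin U & q.2 \notin U]]).
  by case/existsP=> q /and4P[]; exists q.
rewrite negb_exists => /forallP hn.
have : \sum_(q in S2) (pqg p q : nat) <=
   \sum_q (((q.1 \in U) : nat) * nb p q.2 + ((q.2 \in U) : nat) * nb p q.1).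
  rewrite big_mkcond /=; apply: leq_sum => q _.
  move: (hn q); rewrite pqg_nb.
  case: (q \in S2); case: (q.1 != q.2); case: (nb p q.1); case: (nb p q.2);
   case: (q.1 \in U); case: (q.2 \in U) => //.
rewrite big_split /= -!(pair_bigA _ (fun i j => ((i \in U) : nat) * nb p j))
   -!(pair_bigA _ (fun i j => ((j \in U) : nat) * nb p i)) /=.
have -> : \sum_i \sum_j ((i \in U) : nat) * nb p j = #|U| * cd p.
  rewrite -sum1_card big_distrl [RHS]big_mkcond /=; apply: eq_bigr => i _.
  by rewrite -big_distrr /=; case: (i \in U).
have -> : \sum_i \sum_j ((j \in U) : nat) * nb p i = #|U| * cd p.
  rewrite -sum1_card big_distrl [RHS]big_mkcond /= exchange_big; apply: eq_bigr => j _.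
  by rewrite -big_distrr /=; case: (j \in U).
move=> h; have := leq_trans hdeg h.
have : #|U| * cd p <= N * cd p by rewrite leq_mul2r hU orbT.
nia.
Qed.

Lemma deg_all p : \sum_q (pqg p q : nat) + cd p = cd p ^ 2.
Proof.
rewrite /cd -sum_pairs pair_bigA /=.
congr (_ + _); apply: eq_bigr => q _; rewrite pqg_nb.
by case: (q.1 != q.2); case: (nb p q.1); case: (nb p q.2).
Qed.
End Gen.

Definition flipr (A B : Type) (r : A -> B -> bool) : B -> A -> bool := fun b a => r a b.

Lemma pqg_flip (A B : finType) (r : A -> B -> bool) p q :
  pqg (flipr r) q p = pqg r p q.
Proof.
rewrite /pqg /flipr; case: (p.1 != p.2); case: (q.1 != q.2);
  case: (r p.1 q.1); case: (r p.1 q.2); case: (r p.2 q.1); case: (r p.2 q.2) => //.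
Qed.

Section Max.
Variables (A B : finType) (r : A -> B -> bool) (lam : nat).
Definition Phi (S : {set A * A} * {set B * B}) :=
  \sum_(p in S.1) \sum_(q in S.2) (pqg r p q : nat).
Definition Fv (S : {set A * A} * {set B * B}) :=
  Phi S + lam * \sum_(p in ~: S.1) cd r p + lam * \sum_(q in ~: S.2) cd (flipr r) q.

Lemma remove_one (I : finType) (S : {set I}) (i : I) (G W : I -> nat) :
  i \in S ->
  \sum_(j in S) G j = G i + \sum_(j in S :\ i) G j /\
  \sum_(j in ~: (S :\ i)) W j = W i + \sum_(j in ~: S) W j.
Proof.
move=> iS; split; first by rewrite (big_setD1 i iS).
by rewrite setCD setUC big_setU1 // inE iS.
Qed.

Lemma arith1 a c b d g : a + (c + b) + d <= g + a + b + d -> c <= g.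
Proof. lia. Qed.
Lemma arith2 a c b d g : a + b + (c + d) <= g + a + b + d -> c <= g.
Proof. lia. Qed.

Lemma good_struct :
  lam * (\sum_p cd r p + \sum_q cd (flipr r) q) < \sum_p \sum_q (pqg r p q : nat) ->
  exists (S1 : {set A * A}) (S2 : {set B * B}),
    (exists p q, [/\ p \in S1, q \in S2 & pqg r p q]) /\
    (forall p, p \in S1 -> lam * cd r p <= \sum_(q in S2) (pqg r p q : nat)) /\
    (forall q, q \in S2 -> lam * cd (flipr r) q <= \sum_(p in S1) (pqg (flipr r) q p : nat)).
Proof.
move=> hQ.
pose S0 : {set A * A} * {set B * B} := (setT, setT).
have [[S1 S2] Hmax] : {S : {set A * A} * {set B * B} | forall S', Fv S' <= Fv S}.
  by case: (@arg_maxnP _ S0 xpredT Fv isT) => S _ H; exists S => S'; exact: H.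
exists S1, S2; split; [|split].
- have h0 : \sum_p \sum_q (pqg r p q : nat) <= Fv (S1, S2).
    have := Hmax S0; suff -> : Fv S0 = \sum_p \sum_q (pqg r p q : nat) by [].
    rewrite /Fv /Phi /= !setCT !big_set0 !muln0 !addn0.
    apply: eq_big => [p|p _]; first by rewrite inE.
    by apply: eq_bigl => q; rewrite inE.
  have hb1 : \sum_(p in ~: S1) cd r p <= \sum_p cd r p.
    by rewrite [X in _ <= X](bigID (fun p => p \in ~: S1)) /= leq_addr.
  have hb2 : \sum_(q in ~: S2) cd (flipr r) q <= \sum_q cd (flipr r) q.
    by rewrite [X in _ <= X](bigID (fun p => p \in ~: S2)) /= leq_addr.
  have hpos : 0 < Phi (S1, S2).
    rewrite lt0n; apply/negP => /eqP h; move: h0; rewrite /Fv h add0n.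
    have h1 : lam * \sum_(p in ~: S1) cd r p <= lam * \sum_p cd r p.
      by rewrite leq_mul2l hb1 orbT.
    have h2 : lam * \sum_(q in ~: S2) cd (flipr r) q <= lam * \sum_q cd (flipr r) q.
      by rewrite leq_mul2l hb2 orbT.
    move=> /= h0'; have := leq_trans h0' (leq_add h1 h2); by rewrite -mulnDr leqNgt hQ.
  case: (boolP [exists p, exists q, [&& p \in S1, q \in S2 & pqg r p q]]).
    by case/existsP=> p /existsP[q /and3P[]]; exists p, q.
  rewrite negb_exists => /forallP hn; move: hpos; rewrite /Phi big1 //= => p pS.
  rewrite big1 // => q qS; move: (hn p); rewrite negb_exists => /forallP /(_ q).
  by rewrite pS qS /=; case: (pqg r p q).
- move=> p pS; have := Hmax (S1 :\ p, S2).
  rewrite /Fv /Phi /=.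
  have [e1 e2] := remove_one (fun j => \sum_(q in S2) (pqg r j q : nat)) (cd r) pS.
  rewrite e1 e2 mulnDr; move/arith1; apply.
- move=> q qS; have := Hmax (S1, S2 :\ q).
  have ex : forall S2' : {set B * B}, \sum_(p in S1) \sum_(q in S2') (pqg r p q : nat)
     = \sum_(q in S2') \sum_(p in S1) (pqg r p q : nat) by move=> S2'; exact: exchange_big.
  rewrite /Fv /Phi /= !ex.
  have [e1 e2] := remove_one (fun j => \sum_(p in S1) (pqg r p j : nat)) (cd (flipr r)) qS.
  have -> : \sum_(p in S1) (pqg (flipr r) q p : nat) = \sum_(p in S1) (pqg r p q : nat).
    by apply: eq_bigr => p _; rewrite pqg_flip.
  rewrite e1 e2 mulnDr; move/arith2; apply.
Qed.
End Max.
Open Scope nat_scope.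
Section Graph.
Variables (X Y : finType) (adj : X -> Y -> bool).
Definition dY y := \sum_x (adj x y : nat).
Definition dX x := \sum_y (adj x y : nat).

Lemma degY_sum y : degY adj y = dY y.
Proof.
rewrite /degY /dY -sum1_card big_mkcond /=; apply: eq_bigr => x _.
by rewrite inE; case: (adj x y).
Qed.

Lemma dY_le y : dY y <= #|X|.
Proof. by rewrite -degY_sum /degY max_card. Qed.

Lemma cherries_sum : cherries adj = \sum_p cd adj p.
Proof.
pose G y x1 x2 : nat := [&& x1 != x2, adj x1 y & adj x2 y].
transitivity (\sum_y \sum_x1 \sum_x2 G y x1 x2).
  rewrite pair_bigA /= pair_bigA /= /cherries -sum1_card big_mkcond /=.
  rewrite (eq_bigr (fun t => (G t.1.1 t.1.2 t.2 : nat))) //; last by move=> -[[y x1] x2] _; rewrite inE.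
under eq_bigr do rewrite pair_bigA.
rewrite exchange_big /=; apply: eq_bigr => p _.
by rewrite /cd; apply: eq_bigr => y _.
Qed.

Lemma Ch_id : \sum_p cd adj p + \sum_y dY y = \sum_y dY y ^ 2.
Proof.
rewrite /dY; under [RHS]eq_bigr do rewrite -(sum_pairs (fun x => adj x _)).
rewrite big_split /=; congr (_ + _).
under [RHS]eq_bigr do rewrite pair_bigA.
rewrite [RHS]exchange_big /=; apply: eq_bigr => p _.
by rewrite /cd; apply: eq_bigr => y _; rewrite /nb andbA.
Qed.

Lemma e_eq : \sum_y dY y = \sum_x dX x.
Proof. by rewrite /dY /dX exchange_big. Qed.

Lemma Ch'_id : \sum_q cd (flipr adj) q + \sum_x dX x = \sum_x dX x ^ 2.
Proof.
rewrite /dX; under [RHS]eq_bigr do rewrite -(sum_pairs (fun y => adj _ y)).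
rewrite big_split /=; congr (_ + _).
under [RHS]eq_bigr do rewrite pair_bigA.
rewrite [RHS]exchange_big /=; apply: eq_bigr => q _.
by rewrite /cd; apply: eq_bigr => x _; rewrite /nb /flipr andbA.
Qed.

Lemma Q_id : \sum_p \sum_q (pqg adj p q : nat) + \sum_p cd adj p = \sum_p cd adj p ^ 2.
Proof. by rewrite -big_split /=; apply: eq_bigr => p _; rewrite deg_all. Qed.

Lemma Q'_id : \sum_p \sum_q (pqg adj p q : nat) + \sum_q cd (flipr adj) q
   = \sum_q cd (flipr adj) q ^ 2.
Proof.
rewrite exchange_big -big_split /=; apply: eq_bigr => q _; rewrite -deg_all.
by congr (_ + _); apply: eq_bigr => p _; rewrite pqg_flip.
Qed.
End Graph.
Open Scope nat_scope.
Lemma arith_main lam n m e Ch Ch' Q :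
  let K := 2 * lam + 2 in
  Ch ^ 2 <= (n * n) * (Q + Ch) ->
  Ch' ^ 2 <= (m * m) * (Q + Ch') ->
  K * n ^ 2 < Ch ->
  Ch + e <= n * e ->
  e ^ 2 <= n * (Ch' + e) ->
  (m * m) * (K ^ 2 * n) <= e ^ 2 ->
  lam * (Ch + Ch') < Q.
Proof.
move=> K h1 h2 h3 h4 h5 h6.
set K1 := 2 * lam + 1.
have eK : K = K1 + 1 by rewrite /K /K1 -addnA.
have npos : 0 < n by case: (posnP n) => // n0; move: h4 h3; rewrite n0 mul0n; lia.
have s1 : K1 * Ch < Q.
  have : (n * n) * (K * Ch) < (n * n) * (Q + Ch).
    apply: leq_trans h1.
    have h3' : n * n * K < Ch by move: h3; rewrite expnS expn1 mulnC.
    have : (n * n * K) * Ch < Ch * Ch by rewrite ltn_pmul2r //; lia.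
    by rewrite expnS expn1 mulnA.
  rewrite ltn_pmul2l ?muln_gt0 ?npos // eK mulnDl mul1n.
  by rewrite ltn_add2r.
have eKn : K * n < e.
  have : n * (K * n) < n * e.
    apply: leq_trans h4; move: h3; rewrite expnS expn1 mulnCA mulnA; lia.
  by rewrite ltn_pmul2l.
have s2 : K1 * K * (m * m) <= Ch'.
  have h : K * n * Ch' >= K1 * (e ^ 2).
    have h5' : e * e <= n * Ch' + n * e by move: h5; rewrite mulnDr expnS expn1.
    have h7 : K1 * e + n * K <= K * e.
      by rewrite {2}eK mulnDl mul1n leq_add2l mulnC ltnW.
    have h8 : K1 * (e * e) + n * K * e <= K * e * e.
      by rewrite mulnA -mulnDl leq_mul2r h7 orbT.
    have h9 : K * e * e <= K * (n * Ch') + K * (n * e).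
      by rewrite -mulnDr -mulnA leq_mul2l h5' orbT.
    move: h8 h9; rewrite expnS expn1.
    rewrite [n * K * e]mulnAC [K * (n * e)]mulnA [K * (n * Ch')]mulnA [K * n]mulnC.
    lia.
  have : (K * n) * (K1 * K * (m * m)) <= (K * n) * Ch'.
    apply: leq_trans h.
    have -> : K * n * (K1 * K * (m * m)) = K1 * (m * m * (K ^ 2 * n)) by ring.
    by rewrite leq_mul2l h6 orbT.
  by rewrite leq_pmul2l // muln_gt0 npos /K; lia.
have s3 : K1 * Ch' <= Q.
  case: (posnP m) => [m0|mpos].
    move: h2; rewrite m0 mul0n leqn0 expn_eq0 => /andP[/eqP -> _]; by rewrite muln0.
  have : (m * m) * (K1 * K * Ch') <= (m * m) * (Q + Ch').
    apply: leq_trans h2; rewrite expnS expn1 mulnA [m * m * _]mulnC.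
    by rewrite leq_mul2r s2 orbT.
  rewrite leq_pmul2l ?muln_gt0 ?mpos // => h.
  have : K1 * Ch' + Ch' <= K1 * K * Ch'.
    have : K1 + 1 <= K1 * K.
      have : 1 <= K1 by rewrite /K1 addn1.
      rewrite eK => h0; rewrite mulnDr muln1 addnC leq_add2r muln_gt0 h0.
      done.
    by move=> hk; have := leq_mul hk (leqnn Ch'); rewrite mulnDl mul1n.
  lia.
have a1 : 2 * lam * Ch < Q by apply: leq_ltn_trans s1; rewrite leq_mul2r /K1 leq_addr orbT.
have a2 : 2 * lam * Ch' <= Q by apply: leq_trans s3; rewrite leq_mul2r /K1 leq_addr orbT.
rewrite mulnDr; move: a1 a2; rewrite -!mulnA; lia.
Qed.

Lemma sum_const_nat_full (I : finType) (c : nat) : \sum_(i : I) c = #|I| * c.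
Proof. by rewrite sum_nat_const. Qed.

Lemma count_final (X Y : finType) (adj : X -> Y -> bool) lam :
  let K := 2 * lam + 2 in
  (forall y, K ^ 2 * #|X| <= degY adj y ^ 2) ->
  K * #|X| ^ 2 < cherries adj ->
  lam * (\sum_p cd adj p + \sum_q cd (flipr adj) q) < \sum_p \sum_q (pqg adj p q : nat).
Proof.
move=> K hdeg hch.
apply: (@arith_main lam #|X| #|Y| (\sum_y dY adj y)).
- have := cauchy_schwarz (cd adj); by rewrite card_prod -Q_id.
- have := cauchy_schwarz (cd (flipr adj)); by rewrite card_prod -Q'_id.
- by rewrite -cherries_sum.
- rewrite Ch_id big_distrr /=; apply: leq_sum => y _.
  by rewrite expnS expn1 leq_mul2r dY_le orbT.
- rewrite e_eq Ch'_id; exact: cauchy_schwarz.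
- have -> : (\sum_y dY adj y) ^ 2 = \sum_y \sum_y' dY adj y * dY adj y'.
    by rewrite expnS expn1 big_distrl; apply: eq_bigr => y _; rewrite big_distrr.
  have -> : #|Y| * #|Y| * (K ^ 2 * #|X|) = \sum_(y : Y) \sum_(y' : Y) (K ^ 2 * #|X|).
    by rewrite !sum_const_nat_full -mulnA.
  apply: leq_sum => y _; apply: leq_sum => y' _.
  rewrite -leq_sqr [X in _ <= X]expnMn.
  have h1 := hdeg y; have h2 := hdeg y'; rewrite !degY_sum in h1 h2.
  by have := leq_mul h1 h2; rewrite mulnn.
Qed.
Open Scope nat_scope.
Section Embed.
Variables (T : finType) (e : rel T) (v : T).
Hypotheses (esym : symmetric e) (eirr : irreflexive e)
  (econ : forall x y : T, connect e x y)
  (eacyc : forall c : seq T, 2 < size c -> ~~ ucycleb e c).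

Definition eS (S : {set T}) : rel T := [rel a b | [&& e a b, a \in S & b \in S]].

Lemma path_eS_in S x p : path (eS S) x p -> forall z, z \in p -> z \in S.
Proof.
elim: p x => [//|a p IH] x /= /andP[/and3P[_ _ aS] hp] z.
rewrite inE => /orP[/eqP -> //|]; exact: IH hp z.
Qed.

Lemma eS_sym S : symmetric (eS S).
Proof. by move=> a b; rewrite /eS /= esym; case: (a \in S); case: (b \in S); rewrite ?andbT ?andbF. Qed.

Lemma unique_nb (S : {set T}) (u w y : T) :
  (forall x, x \in S -> connect (eS S) v x) -> v \in S ->
  u \notin S -> w \in S -> y \in S -> e u w -> e u y -> y = w.
Proof.
move=> hcon vS uS wS yS euw euy; apply/eqP/negPn/negP => yw.
have : connect (eS S) w y.
  apply: (connect_trans (y := v)); last exact: hcon.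
  by rewrite (sym_connect_sym (eS_sym S)) hcon.
case/connectP=> p hp hy.
move: hy; case: (shortenP hp) => p' hp' up' _ hy.
have pn : p' != [::] by apply: contra yw => /eqP pe; rewrite hy pe.
have := eacyc (c := u :: w :: p').
rewrite /= ltnS; case: p' hp' up' pn hy => [//|a p'] hp' up' _ hy.
rewrite /= ltnS ltn0Sn => /(_ isT); apply/negP/negPn.
have hin := path_eS_in hp'.
have hpe : path e w (a :: p') by apply: sub_path hp'; move=> s t /and3P[].
have hl : e (last w (a :: p')) u by rewrite -hy esym.
have P1 : path e w (rcons (a :: p') u) by rewrite rcons_path hpe hl.
have U1 : u \notin [:: w, a & p'].
  rewrite inE negb_or; apply/andP; split; first by apply: contra uS => /eqP ->.
  by apply: contra uS => /hin.
rewrite /ucycleb /= euw /=; rewrite /= in P1; rewrite P1 U1 /=; exact: up'.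
Qed.
End Embed.

Section Embed2.
Variables (T : finType) (e : rel T) (v : T).
Hypotheses (esym : symmetric e) (eirr : irreflexive e)
  (econ : forall x y : T, connect e x y)
  (eacyc : forall c : seq T, 2 < size c -> ~~ ucycleb e c).
Variables (Z : finType) (Bk : Type) (sel : bool -> Bk -> Z) (J : Bk -> Bk -> bool) (N : nat).
Hypotheses (Jsym : forall b b', J b b' -> J b' b)
  (Jdist : forall b b', J b b' -> sel true b != sel false b)
  (Jext : forall b b', J b b' -> forall U : {set Z}, #|U| <= N ->
            exists b2, [/\ J b b2, sel true b2 \notin U & sel false b2 \notin U])
  (hN : #|T| * 2 <= N).
Variables (b0 b1 : Bk).
Hypothesis J01 : J b0 b1.

Definition Inv (S : {set T}) (P : T -> Bk) :=
  [/\ v \in S, P v = b0,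
    forall x, x \in S -> connect (eS e S) v x &
   [/\ forall x y, x \in S -> y \in S -> e x y -> J (P x) (P y),
    forall x, x \in S -> exists b', J (P x) b'
  & forall x y a c, x \in S -> y \in S -> sel a (P x) = sel c (P y) -> x = y /\ a = c]].

Lemma sel_inj b b' a c : J b b' -> sel a b = sel c b -> a = c.
Proof.
move=> /Jdist h; case: a; case: c => // hh; by rewrite hh eqxx in h.
Qed.

Lemma Inv_init : Inv [set v] (fun _ => b0).
Proof.
split; [| |  | split].
- by rewrite inE.
- by [].
- by move=> x; rewrite inE => /eqP ->; exact: connect0.
- by move=> x y; rewrite !inE => /eqP -> /eqP ->; rewrite eirr.
- by move=> x _; exists b1.
- by move=> x y a c; rewrite !inE => /eqP -> /eqP -> /(sel_inj J01).
Qed.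

Lemma path_closed (S : {set T}) x p :
  (forall a b, e a b -> a \in S -> b \in S) -> x \in S -> path e x p -> last x p \in S.
Proof.
move=> cl; elim: p x => [//|a p IH] x xS /= /andP[exa hp].
exact: IH (cl _ _ exa xS) hp.
Qed.

Lemma Inv_step S P : Inv S P -> S != setT ->
  exists S' P', Inv S' P' /\ #|S| < #|S'|.
Proof.
case=> vS Pv hcon [hedge hnb hinj] nT.
have [w [u [wS uS ewu]]] : exists w u, [/\ w \in S, u \notin S & e w u].
  case: (boolP [exists w, exists u, [&& w \in S, u \notin S & e w u]]).
    by case/existsP=> w /existsP[u /and3P[]] *; exists w, u.
  rewrite negb_exists => /forallP hn.
  have cl : forall a b, e a b -> a \in S -> b \in S.
    move=> a b eab aS; move: (hn a); rewrite negb_exists => /forallP /(_ b).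
    by rewrite aS eab /= andbT negbK.
  have [z zS] : exists z, z \notin S.
    case: (boolP [exists z, z \notin S]); first by case/existsP=> z; exists z.
    rewrite negb_exists => /forallP hz; case/negP: nT; apply/eqP/setP => z.
    by rewrite inE; move: (hz z); rewrite negbK.
  have /connectP[p hp hz] := econ v z.
  by case/negP: zS; rewrite hz; apply: path_closed hp.
pose U := [set sel t.2 (P t.1) | t in [set t : T * bool | t.1 \in S]].
have hU : #|U| <= N.
  apply: leq_trans hN; apply: leq_trans (leq_imset_card _ _) _.
  by apply: leq_trans (max_card _) _; rewrite card_prod card_bool.
have [bw hbw] := hnb w wS.
have [b2 [Jb2 n1 n2]] := Jext hbw hU.
have nU : forall a, sel a b2 \notin U by case.
have inU : forall x a, x \in S -> sel a (P x) \in U.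
  by move=> x a xS; apply/imsetP; exists (x, a) => //; rewrite inE.
have uv : (v == u) = false by apply/negbTE; apply: contra uS => /eqP <-.
have uniq_u : forall y, y \in S -> e u y -> y = w.
  move=> y yS euy; apply: (unique_nb esym eacyc hcon vS uS wS yS) => //.
  by rewrite esym.
pose P' x := if x == u then b2 else P x.
have P'S : forall x, x \in S -> P' x = P x.
  by move=> x xS; rewrite /P'; case: eqP => // xu; move: uS; rewrite -xu xS.
have P'u : P' u = b2 by rewrite /P' eqxx.
exists (u |: S), P'; split; last by rewrite cardsU1 uS.
have inS' : forall x, x \in u |: S -> x = u \/ x \in S.
  by move=> x; rewrite !inE => /orP[/eqP ->|]; [left|right].
split; [| | | split].
- by rewrite inE vS orbT.
- by rewrite P'S.
- have mono : forall x, connect (eS e S) v x -> connect (eS e (u |: S)) v x.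
    apply: connect_sub => a b /and3P[eab aS bS]; apply: connect1.
    by rewrite /eS /= eab !inE aS bS !orbT.
  move=> x /inS' [->|xS]; last exact: mono (hcon _ xS).
  apply: (connect_trans (mono _ (hcon _ wS))); apply: connect1.
  by rewrite /eS /= ewu !inE wS eqxx !orbT.
- move=> x y /inS' [->|xS] /inS' [->|yS] exy.
  + by rewrite eirr in exy.
  + by rewrite P'u P'S // (uniq_u y yS exy); apply: Jsym.
  + have eux : e u x by rewrite esym.
    by rewrite P'u P'S // (uniq_u x xS eux).
  + by rewrite !P'S //; apply: hedge.
- move=> x /inS' [->|xS]; first by rewrite P'u; exists (P w); apply: Jsym.
  by rewrite P'S //; apply: hnb.
- move=> x y a c /inS' [->|xS] /inS' [->|yS].
  + by rewrite P'u => /(sel_inj (Jsym Jb2)).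
  + by rewrite P'u P'S // => h; move: (nU a); rewrite h inU.
  + by rewrite P'u P'S // => h; move: (nU c); rewrite -h inU.
  + by rewrite !P'S //; apply: hinj.
Qed.

Lemma embed_tree : exists P : T -> Bk,
  [/\ P v = b0, (forall u w, e u w -> J (P u) (P w))
    & injective (fun t : T * bool => sel t.2 (P t.1))].
Proof.
suff [P hP] : exists P, Inv setT P.
  case: hP => _ Pv _ [hedge _ hinj]; exists P; split => //.
  - by move=> u w; apply: hedge; rewrite inE.
  - move=> [x a] [y c] /= h; have [-> ->] := hinj x y a c (in_setT _) (in_setT _) h.
    by [].
have main : forall k S P, Inv S P -> #|T| - #|S| <= k -> exists P', Inv setT P'.
  elim=> [|k IH] S P hI hk.
    have eS : S = setT.
      by apply/eqP; rewrite eqEcard subsetT cardsT /=; move: hk; rewrite leqn0 subn_eq0.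
    by rewrite eS in hI; exists P.
  case: (boolP (S == setT)) => [/eqP eS|nT]; first by rewrite eS in hI; exists P.
  have [S' [P' [hI' hc]]] := Inv_step hI nT.
  apply: (IH S' P' hI'); move: hk hc; lia.
exact: (main #|T| _ _ Inv_init (leq_subr _ _)).
Qed.
End Embed2.

Lemma pqg_cd (A B : finType) (r : A -> B -> bool) p q : pqg r p q -> 0 < cd r p.
Proof.
rewrite pqg_nb => /and3P[_ h _]; rewrite /cd (bigD1 q.1) //= h.
by rewrite add1n.
Qed.

Lemma pqg_adj (A B : finType) (r : A -> B -> bool) p q : pqg r p q ->
  forall s t : bool, r (if s then p.1 else p.2) (if t then q.1 else q.2).
Proof. by case/and5P=> _ _ h1 h2 /andP[h3 h4] [] []. Qed.

Lemma card_inr (X Y : finType) (U : {set X + Y}) : #|[set y | inr y \in U]| <= #|U|.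
Proof.
rewrite -(card_imset _ (@inr_inj X Y)); apply: subset_leq_card.
by apply/subsetP => z /imsetP[y]; rewrite inE => h ->.
Qed.

Lemma card_inl (X Y : finType) (U : {set X + Y}) : #|[set x | inl x \in U]| <= #|U|.
Proof.
rewrite -(card_imset _ (@inl_inj X Y)); apply: subset_leq_card.
by apply/subsetP => z /imsetP[y]; rewrite inE => h ->.
Qed.

Unset Implicit Arguments.
Local Open Scope ring_scope.

Theorem mainTheorem8 (R : realType) (T : finType) (e : rel T) (v : T) :
  is_tree e ->
  exists C : R,
    forall (X Y : finType) (adj : X -> Y -> bool),
      (forall y : Y, C * Num.sqrt (#|X|%:R) <= (degY adj y)%:R) ->
      C * (#|X|%:R) ^+ 2 < (cherries adj)%:R ->
      exists f : T * bool -> X + Y,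
        is_copy (blowup2 e) (bip_adj adj) f /\
        (forall a : bool, exists x : X, f (v, a) = inl x).
Proof.
case=> esym eirr econ eacyc.
pose N := (#|T| * 2)%N.
pose lam := (2 * N + 1)%N.
pose K := (2 * lam + 2)%N.
exists K%:R => X Y adj hdeg hch.
have hdeg' : forall y, (K ^ 2 * #|X| <= degY adj y ^ 2)%N.
  move=> y; have h := hdeg y.
  have h0 : 0 <= K%:R * Num.sqrt (#|X|%:R : R) by rewrite mulr_ge0 // sqrtr_ge0.
  have := ler_pM h0 h0 h h.
  rewrite -!expr2 exprMn sqr_sqrtr // -!natrX -natrM ler_nat.
  by [].
have hch' : (K * #|X| ^ 2 < cherries adj)%N.
  by move: hch; rewrite -natrX -natrM ltr_nat.
have hQ := count_final hdeg' hch'.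
have [S1 [S2 [[p0 [q0 [p0S q0S pq0]]] [hS1 hS2]]]] := good_struct hQ.
pose Bk := (X * X + Y * Y)%type.
pose sel (a : bool) (b : Bk) : X + Y :=
  match b with
  | inl p => inl (if a then p.1 else p.2)
  | inr q => inr (if a then q.1 else q.2)
  end.
pose J (b b' : Bk) : bool :=
  match b, b' with
  | inl p, inr q => [&& p \in S1, q \in S2 & pqg adj p q]
  | inr q, inl p => [&& p \in S1, q \in S2 & pqg adj p q]
  | _, _ => false
  end.
have Jsym : forall b b', J b b' -> J b' b by case=> ? [].
have Jdist : forall b b', J b b' -> sel true b != sel false b.
  case=> [p|q] [p'|q'] //= /and3P[_ _ /and5P[h1 h2 _ _ _]].
  - by apply/eqP => -[]; apply/eqP.
  - by apply/eqP => -[]; apply/eqP.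
have Jext : forall b b', J b b' -> forall U : {set X + Y}, (#|U| <= N)%N ->
    exists b2, [/\ J b b2, sel true b2 \notin U & sel false b2 \notin U].
  case=> [p|q] [p'|q'] //= /and3P[pS qS hpq] U hU.
  - have cp := pqg_cd hpq.
    have hU' := leq_trans (card_inr U) hU.
    have [q [qS2 hpq2 n1 n2]] := avoid cp (hS1 p pS) hU'.
    exists (inr q); rewrite /= pS qS2 hpq2; split => //.
    + by move: n1; rewrite inE.
    + by move: n2; rewrite inE.
  - rewrite -pqg_flip in hpq.
    have cp := pqg_cd hpq.
    have hU' := leq_trans (card_inl U) hU.
    have [p [pS2 hpq2 n1 n2]] := avoid cp (hS2 q qS) hU'.
    exists (inl p); rewrite /= pS2 qS -pqg_flip hpq2; split => //.
    + by move: n1; rewrite inE.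
    + by move: n2; rewrite inE.
have J01 : J (inl p0) (inr q0) by rewrite /= p0S q0S pq0.
have hN : (#|T| * 2 <= N)%N by [].
have [P [Pv Pedge Pinj]] :=
  embed_tree v esym eirr econ eacyc Jsym Jdist Jext hN J01.
exists (fun t => sel t.2 (P t.1)); split; last first.
  by move=> a; rewrite /= Pv; exists (if a then p0.1 else p0.2).
split => //.
move=> [u a] [w c]; rewrite /blowup2 /= => euw.
have := Pedge u w euw.
case: (P u) => [p|q]; case: (P w) => [p'|q'] //= /and3P[_ _ h].
- exact: pqg_adj.
- exact: pqg_adj.
Qed.
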